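(* Let $\mathbf A$ be a WHB-algebra. The map $\Theta$ sending $Y\in DC(X(\mathbf A))$ to $\Theta(Y)=\{(a,b)\in A\times A\colon \sigma_{\mathbf A}(a)\cap Y=\sigma_{\mathbf A}(b)\cap Y\}$ is a bijection from $DC(X(\mathbf A))$ onto the congruence lattice $\mathrm{Con}(\mathbf A)$, with inverse $\theta\mapsto\Theta^{-1}(\theta)=\{P\in X(\mathbf A)\colon \text{for all }(a,b)\in\theta,\ a\in P\Rightarrow b\in P\}$; these maps reverse inclusion, so they constitute a dual lattice isomorphism between $\mathrm{Con}(\mathbf A)$ and $DC(X(\mathbf A))$.
   Context: A WHB-algebra is an algebra $(A,\wedge,\vee,\to,\leftarrow,0,1)$ such that $(A,\wedge,\vee,0,1)$ is a bounded distributive lattice and for all $a,b,c\in A$: $a\to a=1$; $a\to(b\wedge c)=(a\to b)\wedge(a\to c)$; $(a\vee b)\to c=(a\to c)\wedge(b\to c)$; $(a\to b)\wedge(b\to c)\le a\to c$; $a\leftarrow a=0$; $(a\vee b)\leftarrow c=(a\leftarrow c)\vee(b\leftarrow c)$; $a\leftarrow(b\wedge c)=(a\leftarrow b)\vee(a\leftarrow c)$; $a\leftarrow c\le(a\leftarrow b)\vee(b\leftarrow c)$; $a\wedge((a\to b)\leftarrow 0)\le b$; $a\le b\vee(1\to(a\leftarrow b))$. $X(\mathbf A)$ is the set of prime filters of $\mathbf A$, $\sigma_{\mathbf A}(a)=\{P\in X(\mathbf A)\colon a\in P\}$, and $\tau_{\mathbf A}$ is the topology on $X(\mathbf A)$ with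 subbase $\{\sigma_{\mathbf A}(a)\colon a\in A\}\cup\{X(\mathbf A)\setminus\sigma_{\mathbf A}(a)\colon a\in A\}$. Relations on $X(\mathbf A)$: $(P,Q)\in R_{\mathbf A}$ iff for all $a,b$, $a\to b\in P$ and $a\in Q$ imply $b\in Q$; $(P,Q)\in S_{\mathbf A}$ iff for all $a,b$, $a\in Q$ and $b\notin Q$ imply $a\leftarrow b\in P$. $DC(X(\mathbf A))$ is the set of $\tau_{\mathbf A}$-closed sets $Y\subseteq X(\mathbf A)$ such that $P\in Y$ and $(P,Q)\in R_{\mathbf A}$ imply $Q\in Y$, and $P\in Y$ and $(P,Q)\in S_{\mathbf A}$ imply $Q\in Y$, ordered by inclusion. *)

(* Defs.v *)
From Stdlib Require Import List.
Import ListNotations.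

Record WHB := {
  car :> Type;
  wmeet : car -> car -> car;
  wjoin : car -> car -> car;
  wimp  : car -> car -> car;
  wcoimp : car -> car -> car;
  wzero : car;
  wone : car;
  meetC : forall a b, wmeet a b = wmeet b a;
  meetA : forall a b c, wmeet a (wmeet b c) = wmeet (wmeet a b) c;
  joinC : forall a b, wjoin a b = wjoin b a;
  joinA : forall a b c, wjoin a (wjoin b c) = wjoin (wjoin a b) c;
  absorb_mj : forall a b, wmeet a (wjoin a b) = a;
  absorb_jm : forall a b, wjoin a (wmeet a b) = a;
  distr : forall a b c, wmeet a (wjoin b c) = wjoin (wmeet a b) (wmeet a c);
  join0 : forall a, wjoin a wzero = a;
  meet1 : forall a, wmeet a wone = a;
  imp_refl : forall a, wimp a a = wone;
  imp_meet : forall a b c, wimp a (wmeet b c) = wmeet (wimp a b) (wimp a c);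
  imp_join : forall a b c, wimp (wjoin a b) c = wmeet (wimp a c) (wimp b c);
  imp_trans : forall a b c,
      wmeet (wmeet (wimp a b) (wimp b c)) (wimp a c) = wmeet (wimp a b) (wimp b c);
  coimp_refl : forall a, wcoimp a a = wzero;
  coimp_join : forall a b c, wcoimp (wjoin a b) c = wjoin (wcoimp a c) (wcoimp b c);
  coimp_meet : forall a b c, wcoimp a (wmeet b c) = wjoin (wcoimp a b) (wcoimp a c);
  coimp_trans : forall a b c,
      wmeet (wcoimp a c) (wjoin (wcoimp a b) (wcoimp b c)) = wcoimp a c;
  mix1 : forall a b,
      wmeet (wmeet a (wcoimp (wimp a b) wzero)) b = wmeet a (wcoimp (wimp a b) wzero);
  mix2 : forall a b,
      wmeet a (wjoin b (wimp wone (wcoimp a b))) = a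
}.

Arguments wmeet {_}. Arguments wjoin {_}. Arguments wimp {_}.
Arguments wcoimp {_}. Arguments wzero {_}. Arguments wone {_}.

Definition wle {A : WHB} (a b : A) : Prop := wmeet a b = a.

Definition prime_filter {A : WHB} (P : A -> Prop) : Prop :=
  P wone /\ ~ P wzero /\
  (forall a b, P a -> wle a b -> P b) /\
  (forall a b, P a -> P b -> P (wmeet a b)) /\
  (forall a b, P (wjoin a b) -> P a \/ P b).

Definition X (A : WHB) : Type := { P : A -> Prop | prime_filter P }.

Definition sigma {A : WHB} (a : A) : X A -> Prop := fun P => proj1_sig P a.

Definition subbasic {A : WHB} (U : X A -> Prop) : Prop :=
  exists a : A, (forall P, U P <-> sigma a P) \/ (forall P, U P <-> ~ sigma a P).

(** open sets of the topology generated by the subbase: every point has a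
    finite intersection of subbasic sets containing it and contained in U *)
Definition tau_open {A : WHB} (U : X A -> Prop) : Prop :=
  forall P, U P ->
    exists l : list (X A -> Prop),
      (forall V, In V l -> subbasic V) /\
      (forall V, In V l -> V P) /\
      (forall Q, (forall V, In V l -> V Q) -> U Q).

Definition tau_closed {A : WHB} (Y : X A -> Prop) : Prop :=
  tau_open (fun P => ~ Y P).

Definition RA {A : WHB} (P Q : X A) : Prop :=
  forall a b : A, proj1_sig P (wimp a b) -> proj1_sig Q a -> proj1_sig Q b.

Definition SA {A : WHB} (P Q : X A) : Prop :=
  forall a b : A, proj1_sig Q a -> ~ proj1_sig Q b -> proj1_sig P (wcoimp a b).

Definition DC {A : WHB} (Y : X A -> Prop) : Prop :=
  tau_closed Y /\
  (forall P Q, Y P -> RA P Q -> Y Q) /\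
  (forall P Q, Y P -> SA P Q -> Y Q).

Definition congruence {A : WHB} (th : A -> A -> Prop) : Prop :=
  (forall a, th a a) /\
  (forall a b, th a b -> th b a) /\
  (forall a b c, th a b -> th b c -> th a c) /\
  (forall a b c d, th a b -> th c d -> th (wmeet a c) (wmeet b d)) /\
  (forall a b c d, th a b -> th c d -> th (wjoin a c) (wjoin b d)) /\
  (forall a b c d, th a b -> th c d -> th (wimp a c) (wimp b d)) /\
  (forall a b c d, th a b -> th c d -> th (wcoimp a c) (wcoimp b d)).

Definition Theta {A : WHB} (Y : X A -> Prop) : A -> A -> Prop :=
  fun a b => forall P, Y P -> (sigma a P <-> sigma b P).

Definition Theta_inv {A : WHB} (th : A -> A -> Prop) : X A -> Prop :=
  fun P => forall a b, th a b -> proj1_sig P a -> proj1_sig P b.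

(* Main.v *)
Require Import Defs.
From Stdlib Require Import List Classical.
Import ListNotations.
From mathcomp Require boolp classical_sets.

Module ZornWrap.
From mathcomp Require Import all_boot boolp classical_sets.
Lemma zorn_sets (U : Type) (Fam : (U -> Prop) -> Prop) (G0 : U -> Prop) :
  Fam G0 ->
  (forall C : (U -> Prop) -> Prop, (forall s, C s -> Fam s) ->
     (forall s t, C s -> C t -> (forall w, s w -> t w) \/ (forall w, t w -> s w)) ->
     exists u, Fam u /\ forall s, C s -> forall w, s w -> u w) ->
  exists M, Fam M /\ forall N, Fam N -> (forall w, M w -> N w) -> forall w, N w -> M w.
Proof.
move=> H0 Hch.
pose T := {G : U -> Prop | Fam G}.
pose R (s t : T) : bool := `[< forall w, proj1_sig s w -> proj1_sig t w >].
have t0 : T := exist _ G0 H0.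
have [M HM] : exists t, premaximal R t.
  apply: (@ZL_preorder T t0 R).
- by move=> t; apply/asboolP.
- by move=> r s t /asboolP H1 /asboolP H2; apply/asboolP => w /H1 /H2.
- move=> A0 Htot.
  pose C := (fun s => exists t : T, A0 t /\ proj1_sig t = s).
  have h1 : forall s, C s -> Fam s.
    by move=> s [t [_ <-]]; exact: proj2_sig t.
  have h2 : forall s t, C s -> C t -> (forall w, s w -> t w) \/ (forall w, t w -> s w).
    move=> s t [s' [As' <-]] [t' [At' <-]].
    case: (Htot s' t' As' At') => H.
    * by left; apply/asboolP.
    * by right; apply/asboolP.
  have [u [Fu Hu]] := Hch C h1 h2.
  exists (exist _ u Fu) => s As; apply/asboolP => w /=; apply: Hu; by exists s.
- exists (proj1_sig M); split; first exact: proj2_sig M.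
  move=> N FN MN.
  have /asboolP := HM (exist _ N FN) (introT (asboolP _) MN).
  done.
Qed.

End ZornWrap.

Section Lat.
Variable A : WHB.

Lemma meet_idem (x : A) : wmeet x x = x.
Proof. rewrite <- (absorb_jm A x x) at 2. apply absorb_mj. Qed.

Lemma le_refl (x : A) : wle x x.
Proof. apply meet_idem. Qed.

Lemma le_trans (x y z : A) : wle x y -> wle y z -> wle x z.
Proof. unfold wle. intros H1 H2. rewrite <- H1. rewrite <- meetA. rewrite H2. reflexivity. Qed.

Lemma le_ml (x y : A) : wle (wmeet x y) x.
Proof. unfold wle. rewrite <- meetA. rewrite (meetC A y x). rewrite meetA. rewrite meet_idem. reflexivity. Qed.

Lemma le_mr (x y : A) : wle (wmeet x y) y.
Proof. unfold wle. rewrite <- meetA. rewrite meet_idem. reflexivity. Qed.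

Lemma le_mi (x y z : A) : wle x y -> wle x z -> wle x (wmeet y z).
Proof. unfold wle. intros H1 H2. rewrite meetA. rewrite H1. exact H2. Qed.

Lemma le_0 (x : A) : wle wzero x.
Proof. unfold wle. rewrite <- (join0 A x) at 1. rewrite joinC. apply absorb_mj. Qed.

Lemma le_1 (x : A) : wle x wone.
Proof. apply meet1. Qed.

Lemma le_jl (x y : A) : wle x (wjoin x y).
Proof. apply absorb_mj. Qed.

Lemma le_jr (x y : A) : wle y (wjoin x y).
Proof. rewrite joinC. apply absorb_mj. Qed.

Lemma le_imp1 (x y : A) : wle x y -> wimp x y = wone.
Proof. unfold wle. intro H. pose proof (imp_meet A x x y) as E.
 rewrite H in E. rewrite imp_refl in E. rewrite E. rewrite meetC. rewrite meet1. reflexivity. Qed.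

Lemma join0l (x : A) : wjoin wzero x = x.
Proof. rewrite joinC. apply join0. Qed.

Lemma le_coimp0 (x y : A) : wle x y -> wcoimp x y = wzero.
Proof. unfold wle. intro H. pose proof (coimp_meet A x x y) as E.
 rewrite H in E. rewrite coimp_refl in E. rewrite join0l in E. symmetry. exact E. Qed.

Section PF.
Variable P : A -> Prop.
Hypothesis HP : prime_filter P.
Lemma pf1 : P wone. Proof. apply HP. Qed.
Lemma pf0 : ~ P wzero. Proof. apply HP. Qed.
Lemma pfup x y : P x -> wle x y -> P y. Proof. apply HP. Qed.
Lemma pfmeet x y : P x -> P y -> P (wmeet x y). Proof. apply HP. Qed.
Lemma pfjoin x y : P (wjoin x y) -> P x \/ P y. Proof. apply HP. Qed.
Lemma pfmeet_iff x y : P (wmeet x y) <-> P x /\ P y.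
Proof. split. intro H. split; eapply pfup; eauto using le_ml, le_mr.
  intros [H1 H2]; apply pfmeet; auto. Qed.
Lemma pfjoin_iff x y : P (wjoin x y) <-> P x \/ P y.
Proof. split. apply pfjoin. intros [H|H]; eapply pfup; eauto using le_jl, le_jr. Qed.
End PF.

Section Sep.
Variable rho : A -> A -> Prop.
Hypothesis rtrans : forall x y z, rho x y -> rho y z -> rho x z.
Hypothesis rmono : forall x y, wle x y -> rho x y.
Hypothesis rmeet : forall x y z, rho x y -> rho x z -> rho x (wmeet y z).
Hypothesis rjoin : forall x y z, rho x z -> rho y z -> rho (wjoin x y) z.

Lemma sep (a c : A) : ~ rho a c ->
  exists Q : X A, proj1_sig Q a /\ ~ proj1_sig Q c /\
    (forall x y, proj1_sig Q x -> rho x y -> proj1_sig Q y).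
Proof.
intro Hac.
set (Fam := fun G : A -> Prop => G a /\ ~ G c /\ (forall x y, G x -> G y -> G (wmeet x y))
   /\ (forall x y, G x -> rho x y -> G y)).
assert (HG0 : forall G, Fam G -> forall w, rho a w -> G w).
{ intros G [Ga [_ [_ Gc]]] w Hw. eauto. }
destruct (ZornWrap.zorn_sets A Fam (fun w => rho a w)) as [M [FM HM]].
- split. apply rmono, le_refl. split. exact Hac. split.
  intros; apply rmeet; auto. intros; eauto.
- intros C HC Htot.
  exists (fun w => rho a w \/ exists s, C s /\ s w). split.
  + split. left; apply rmono, le_refl. split.
    intros [H|[s [Cs sc]]]. contradiction. apply (HC s Cs); exact sc. split.
    * intros x y [Hx|[s [Cs sx]]] [Hy|[t [Ct ty]]].
      -- left; apply rmeet; auto.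
      -- right; exists t; split; auto. apply (HC t Ct); auto. apply (HG0 t (HC t Ct)); auto.
      -- right; exists s; split; auto. apply (HC s Cs); auto. apply (HG0 s (HC s Cs)); auto.
      -- destruct (Htot s t Cs Ct) as [H|H].
         ++ right; exists t; split; auto. apply (HC t Ct); auto.
         ++ right; exists s; split; auto. apply (HC s Cs); auto.
    * intros x y [Hx|[s [Cs sx]]] Hxy.
      -- left; eauto.
      -- right; exists s; split; auto. apply (HC s Cs) with x; auto.
  + intros s Cs w sw. right. exists s. auto.
- destruct FM as [Ma [Mc [Mmeet Mcl]]].
  assert (PM : prime_filter M).
  { split. apply Mcl with a; auto. apply rmono, le_1.
    split. intro H0. apply Mc. apply Mcl with wzero; auto. apply rmono, le_0.
    split. intros; eapply Mcl; eauto.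
    split. exact Mmeet.
    intros y z Hyz.
    destruct (classic (M y)) as [Hy|Hy]; [left; exact Hy|].
    destruct (classic (M z)) as [Hz|Hz]; [right; exact Hz|].
    exfalso.
    assert (Key : forall y, ~ M y -> exists m, M m /\ rho (wmeet m y) c).
    { intros u Hu. apply NNPP. intro Hn.
      set (Mu := fun w => exists m, M m /\ rho (wmeet m u) w).
      assert (FMu : Fam Mu).
      { split. exists a; split; auto. apply rmono, le_ml. split.
        intro H1. apply Hn. exact H1. split.
        - intros x1 x2 [m1 [M1 R1]] [m2 [M2 R2]]. exists (wmeet m1 m2). split; auto.
          apply rmeet.
          + apply rtrans with (wmeet m1 u); auto. apply rmono. apply le_mi.
            eapply le_trans; [apply le_ml| apply le_ml]. apply le_mr.
          + apply rtrans with (wmeet m2 u); auto. apply rmono. apply le_mi.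
            eapply le_trans; [apply le_ml| apply le_mr]. apply le_mr.
        - intros x1 x2 [m1 [M1 R1]] R2. exists m1. split; eauto. }
      apply Hu. apply (HM Mu FMu).
      - intros w Mw. exists w. split; auto. apply rmono, le_ml.
      - exists a. split; auto. apply rmono, le_mr. }
    destruct (Key y Hy) as [m1 [M1 R1]].
    destruct (Key z Hz) as [m2 [M2 R2]].
    apply Mc. apply Mcl with (wmeet (wmeet m1 m2) (wjoin y z)).
    apply Mmeet; auto.
    rewrite distr. apply rjoin.
    + apply rtrans with (wmeet m1 y); auto. apply rmono. apply le_mi.
      eapply le_trans; [apply le_ml| apply le_ml]. apply le_mr.
    + apply rtrans with (wmeet m2 z); auto. apply rmono. apply le_mi.
      eapply le_trans; [apply le_ml| apply le_mr]. apply le_mr. }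
  exists (exist _ M PM). simpl. split; auto.
Qed.
End Sep.
End Lat.

Section Main.
Variable A : WHB.

Lemma pfX (P : X A) : prime_filter (proj1_sig P).
Proof. exact (proj2_sig P). Qed.

Lemma sep_imp (P : X A) (a c : A) : ~ proj1_sig P (wimp a c) ->
  exists Q : X A, RA P Q /\ proj1_sig Q a /\ ~ proj1_sig Q c.
Proof.
intro H. pose proof (pfX P) as HP.
set (rho := fun x y => proj1_sig P (wimp x y)).
assert (h1 : forall x y z, rho x y -> rho y z -> rho x z).
{ intros x y z H1 H2. apply (pfup _ _ HP) with (x := wmeet (wimp x y) (wimp y z)).
  apply (pfmeet _ _ HP); auto. apply imp_trans. }
assert (h2 : forall x y, wle x y -> rho x y).
{ intros x y Hxy. unfold rho. rewrite le_imp1; auto. apply (pf1 _ _ HP). }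
assert (h3 : forall x y z, rho x y -> rho x z -> rho x (wmeet y z)).
{ intros x y z H1 H2. unfold rho. rewrite imp_meet. apply (pfmeet _ _ HP); auto. }
assert (h4 : forall x y z, rho x z -> rho y z -> rho (wjoin x y) z).
{ intros x y z H1 H2. unfold rho. rewrite imp_join. apply (pfmeet _ _ HP); auto. }
destruct (sep A rho h1 h2 h3 h4 a c H) as [Q [Qa [Qc Qcl]]].
exists Q. split; auto. intros x y H1 H2. eauto.
Qed.

Lemma sep_coimp (P : X A) (a c : A) : proj1_sig P (wcoimp a c) ->
  exists Q : X A, SA P Q /\ proj1_sig Q a /\ ~ proj1_sig Q c.
Proof.
intro H. pose proof (pfX P) as HP.
set (rho := fun x y => ~ proj1_sig P (wcoimp x y)).
assert (h1 : forall x y z, rho x y -> rho y z -> rho x z).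
{ intros x y z H1 H2 H3. apply (pfup _ _ HP) with (y := wjoin (wcoimp x y) (wcoimp y z)) in H3.
  apply (pfjoin _ _ HP) in H3. unfold rho in *. tauto. apply coimp_trans. }
assert (h2 : forall x y, wle x y -> rho x y).
{ intros x y Hxy. unfold rho. rewrite le_coimp0; auto. apply (pf0 _ _ HP). }
assert (h3 : forall x y z, rho x y -> rho x z -> rho x (wmeet y z)).
{ intros x y z H1 H2 H3. unfold rho in H3. rewrite coimp_meet in H3. apply (pfjoin _ _ HP) in H3. unfold rho in *. tauto. }
assert (h4 : forall x y z, rho x z -> rho y z -> rho (wjoin x y) z).
{ intros x y z H1 H2 H3. unfold rho in H3. rewrite coimp_join in H3. apply (pfjoin _ _ HP) in H3. unfold rho in *. tauto. }
assert (Hn : ~ rho a c) by (unfold rho; tauto).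
destruct (sep A rho h1 h2 h3 h4 a c Hn) as [Q [Qa [Qc Qcl]]].
exists Q. split; auto. intros x y H1 H2. apply NNPP. intro H3. apply H2. eauto.
Qed.

Lemma theta_imp (Y : X A -> Prop) (HY : DC Y) a b c d :
  Theta Y a b -> Theta Y c d -> forall P, Y P -> sigma (wimp a c) P -> sigma (wimp b d) P.
Proof.
intros Hab Hcd P YP H. apply NNPP. intro Hn.
destruct (sep_imp P b d Hn) as [Q [RQ [Qb Qd]]].
destruct HY as [_ [HR _]].
assert (YQ : Y Q) by eauto.
apply Qd. apply (Hcd Q YQ). apply (RQ a c H). apply (Hab Q YQ). exact Qb.
Qed.

Lemma theta_coimp (Y : X A -> Prop) (HY : DC Y) a b c d :
  Theta Y a b -> Theta Y c d -> forall P, Y P -> sigma (wcoimp a c) P -> sigma (wcoimp b d) P.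
Proof.
intros Hab Hcd P YP H.
destruct (sep_coimp P a c H) as [Q [SQ [Qa Qc]]].
destruct HY as [_ [_ HS]].
assert (YQ : Y Q) by eauto.
apply SQ. apply (Hab Q YQ); auto. intro Qd. apply Qc. apply (Hcd Q YQ). exact Qd.
Qed.

Lemma part1 (Y : X A -> Prop) : DC Y -> congruence (Theta Y).
Proof.
intro HY. unfold congruence, Theta.
split. intros; tauto.
split. intros a b H P YP. specialize (H P YP). tauto.
split. intros a b c H1 H2 P YP. specialize (H1 P YP). specialize (H2 P YP). tauto.
split. intros a b c d H1 H2 P YP. specialize (H1 P YP). specialize (H2 P YP).
  unfold sigma in *. rewrite !(pfmeet_iff _ _ (pfX P)). tauto.
split. intros a b c d H1 H2 P YP. specialize (H1 P YP). specialize (H2 P YP).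
  unfold sigma in *. rewrite !(pfjoin_iff _ _ (pfX P)). tauto.
split. intros a b c d H1 H2 P YP. split.
  apply (theta_imp Y HY a b c d); auto.
  apply (theta_imp Y HY b a d c); auto.
  intros Q YQ; specialize (H1 Q YQ); tauto. intros Q YQ; specialize (H2 Q YQ); tauto.
intros a b c d H1 H2 P YP. split.
  apply (theta_coimp Y HY a b c d); auto.
  apply (theta_coimp Y HY b a d c); auto.
  intros Q YQ; specialize (H1 Q YQ); tauto. intros Q YQ; specialize (H2 Q YQ); tauto.
Qed.

Lemma not_thinv (th : A -> A -> Prop) (P : X A) : ~ Theta_inv th P ->
  exists a b, th a b /\ proj1_sig P a /\ ~ proj1_sig P b.
Proof.
intro H. apply NNPP. intro Hn. apply H. intros a b Hab Pa. apply NNPP. intro Pb.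
apply Hn. exists a, b. auto.
Qed.

Lemma part2 (th : A -> A -> Prop) : congruence th -> DC (Theta_inv th).
Proof.
intros [Hr [Hs [Ht [Hm [Hj [Hi Hc]]]]]].
split; [|split].
- unfold tau_closed, tau_open. intros P HP.
  destruct (not_thinv th P HP) as [a [b [Hab [Pa Pb]]]].
  exists [sigma a; fun Q => ~ sigma b Q]. split; [|split].
  + intros V [<-|[<-|[]]]. exists a; left; tauto. exists b; right; tauto.
  + intros V [<-|[<-|[]]]; auto.
  + intros Q HQ Hinv. apply (HQ (fun Q => ~ sigma b Q)). simpl; auto.
    apply (Hinv a b Hab). apply (HQ (sigma a)). simpl; auto.
- intros P Q HP RQ a b Hab Qa. apply (RQ a b); auto.
  apply (HP wone). rewrite <- (imp_refl A a). apply Hi; auto. apply (pf1 _ _ (pfX P)).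
- intros P Q HP SQ a b Hab Qa. apply NNPP. intro Qb.
  apply (pf0 _ _ (pfX P)). apply (HP (wcoimp a b)). rewrite <- (coimp_refl A b).
  apply Hc; auto. apply SQ; auto.
Qed.

Lemma list_basic (P : X A) (l : list (X A -> Prop)) :
  (forall V, In V l -> subbasic V) -> (forall V, In V l -> V P) ->
  exists a b, proj1_sig P a /\ ~ proj1_sig P b /\
    forall Q : X A, proj1_sig Q a -> ~ proj1_sig Q b -> forall V, In V l -> V Q.
Proof.
pose proof (pfX P) as HP.
induction l as [|V l IH]; intros Hb Hin.
- exists wone, wzero. split. apply (pf1 _ _ HP). split. apply (pf0 _ _ HP). intros ? ? ? ? [].
- destruct IH as [a [b [Pa [Pb Hl]]]]. intros; apply Hb; simpl; auto. intros; apply Hin; simpl; auto.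
  destruct (Hb V (or_introl eq_refl)) as [e [He|He]].
  + exists (wmeet a e), b. split. apply pfmeet; auto. apply He. apply Hin; simpl; auto.
    split; auto. intros Q Qa Qb W [<-|HW].
    * apply He. apply (pfmeet_iff _ _ (pfX Q)) in Qa. apply Qa.
    * apply Hl; auto. apply (pfmeet_iff _ _ (pfX Q)) in Qa. apply Qa.
  + exists a, (wjoin b e). split; auto. split.
    rewrite (pfjoin_iff _ _ HP). intros [H|H]; auto. apply (proj1 (He P)) in H; auto. apply Hin; simpl; auto.
    intros Q Qa Qb W [<-|HW].
    * apply He. intro H. apply Qb. apply (pfjoin_iff _ _ (pfX Q)). auto.
    * apply Hl; auto. intro H. apply Qb. apply (pfjoin_iff _ _ (pfX Q)). auto.
Qed.

Lemma part3 (Y : X A -> Prop) : DC Y -> forall P, Theta_inv (Theta Y) P <-> Y P.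
Proof.
intros HY P. split.
- intro H. apply NNPP. intro nY.
  destruct HY as [Hcl _].
  destruct (Hcl P nY) as [l [Hb [Hin Hsub]]].
  destruct (list_basic P l Hb Hin) as [a [b [Pa [Pb Hl]]]].
  apply Pb. apply (pfmeet_iff _ _ (pfX P) a b).
  apply (H a (wmeet a b)); auto.
  intros Q YQ. unfold sigma. rewrite (pfmeet_iff _ _ (pfX Q)). split; [|tauto].
  intro Qa. split; auto. apply NNPP. intro Qb. apply (Hsub Q); auto. apply Hl; auto.
- intros YP u v H Pu. apply (H P YP). exact Pu.
Qed.

Lemma part4 (th : A -> A -> Prop) : congruence th ->
  forall a b, Theta (Theta_inv th) a b <-> th a b.
Proof.
intro Hth. pose proof Hth as [Hr [Hs [Ht [Hm [Hj [Hi Hc]]]]]].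
assert (Key : forall x y, (forall P : X A, Theta_inv th P -> proj1_sig P x -> proj1_sig P y) ->
   th (wmeet x y) x).
{ intros x y H. apply NNPP. intro Hn.
  set (rho := fun u v => th (wmeet u v) u).
  assert (h1 : forall x y z, rho x y -> rho y z -> rho x z).
  { intros u v w H1 H2. unfold rho in *. eapply Ht. apply Hm. apply (Hs _ _ H1). apply Hr.
    rewrite <- meetA. eapply Ht; [apply Hm; [apply Hr|exact H2]|exact H1]. }
  assert (h2 : forall x y, wle x y -> rho x y).
  { intros u v Huv. unfold rho. rewrite Huv. auto. }
  assert (h3 : forall x y z, rho x y -> rho x z -> rho x (wmeet y z)).
  { intros u v w H1 H2. unfold rho in *. rewrite meetA. eapply Ht; [|exact H2]. apply Hm; auto. }
  assert (h4 : forall x y z, rho x z -> rho y z -> rho (wjoin x y) z).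
  { intros u v w H1 H2. unfold rho in *. rewrite meetC. rewrite distr. rewrite (meetC A w u), (meetC A w v). apply Hj; auto. }
  destruct (sep A rho h1 h2 h3 h4 x y Hn) as [Q [Qx [Qy Qcl]]].
  apply Qy. apply H; auto. intros u v Huv Qu. apply Qcl with u; auto.
  unfold rho. eapply Ht. apply Hm. apply Hr. apply Hs. exact Huv. rewrite meet_idem. auto. }
intros a b. split.
- intro H. assert (H1 := Key a b). assert (H2 := Key b a).
  eapply Ht. apply Hs. apply H1. intros P HP; apply (H P HP).
  rewrite meetC. apply H2. intros P HP; apply (H P HP).
- intros H P HP. unfold sigma. split. apply HP; auto. apply HP; auto.
Qed.

End Main.

Theorem theorem5p10 (A : WHB) :
  (* Theta maps DC(X(A)) into Con(A), Theta^{-1} maps Con(A) into DC(X(A)) *)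
  (forall Y : X A -> Prop, DC Y -> congruence (Theta Y)) /\
  (forall th : A -> A -> Prop, congruence th -> DC (Theta_inv th)) /\
  (* they are mutually inverse *)
  (forall Y : X A -> Prop, DC Y -> forall P, Theta_inv (Theta Y) P <-> Y P) /\
  (forall th : A -> A -> Prop, congruence th ->
     forall a b, Theta (Theta_inv th) a b <-> th a b) /\
  (* they reverse inclusion *)
  (forall Y1 Y2 : X A -> Prop, DC Y1 -> DC Y2 ->
     ((forall P, Y1 P -> Y2 P) <->
      (forall a b, Theta Y2 a b -> Theta Y1 a b))) /\
  (forall th1 th2 : A -> A -> Prop, congruence th1 -> congruence th2 ->
     ((forall a b, th1 a b -> th2 a b) <->
      (forall P, Theta_inv th2 P -> Theta_inv th1 P))).
Proof.
split. apply part1.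
split. apply part2.
split. apply part3.
split. apply part4.
split.
- intros Y1 Y2 H1 H2. split.
  + intros H a b Hab P YP. apply Hab. auto.
  + intros H P YP. apply (part3 A Y2 H2). apply (part3 A Y1 H1) in YP.
    intros a b Hab. apply YP. apply H. exact Hab.
- intros th1 th2 H1 H2. split.
  + intros H P HP a b Hab. apply HP. auto.
  + intros H a b Hab. apply (part4 A th2 H2). apply (part4 A th1 H1) in Hab.
    intros P HP. apply Hab. apply H. exact HP.
Qed.
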